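(* Let $p$ be an odd prime and $m\in\mathbb Z_p$ with $m\not\equiv0\pmod p$. Then $$\sum_{k=0}^{p-1}\frac{\binom{2k}k^3}{(16m)^k(2k-1)^2}\equiv\Big(4-\frac{16}m\Big)\sum_{k=0}^{(p-1)/2}\frac{k\binom{2k}k^3}{(16m)^k}+\Big(1+\frac4m\Big)\sum_{k=0}^{(p-1)/2}\frac{\binom{2k}k^3}{(16m)^k}-\frac6m\sum_{k=0}^{(p-1)/2}\frac{\binom{2k}k^3}{(16m)^k(k+1)}\pmod{p^3}.$$
   Context: $\mathbb Z_p$ denotes the set of rational numbers whose denominator is not divisible by $p$; for $u,v\in\mathbb Z_p$, $u\equiv v\pmod{p^r}$ means $(u-v)/p^r\in\mathbb Z_p$. *)

(* Defs.v *)
From mathcomp Require Import all_boot all_order all_algebra.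
Set Implicit Arguments. Unset Strict Implicit. Unset Printing Implicit Defensive.
Import Order.TTheory GRing.Theory Num.Theory.
Local Open Scope ring_scope.

Definition in_Zp (p : nat) (x : rat) : bool := ~~ (p %| `|denq x|)%N.

Definition congr_pr (p r : nat) (u v : rat) : Prop :=
  in_Zp p ((u - v) / (p ^ r)%:R).

(* Main.v *)
Require Import Defs.
From mathcomp Require Import all_boot all_order all_algebra.
From mathcomp Require Import ring lra zify.
Import Order.TTheory GRing.Theory Num.Theory.
Local Open Scope ring_scope.

Section Zp.
Variable p : nat.
Hypothesis pp : prime p.

Lemma ZpP (x : rat) :
  in_Zp p x <-> exists a b : int, ~~ (p %| `|b|)%N /\ x = a%:~R / b%:~R.
Proof.
split.
  move=> h; exists (numq x), (denq x); split => //.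
  by rewrite divq_num_den.
case=> a [b [hb ->]].
clear x; set x := _ / _.
have bnz : b != 0 by apply: contraNneq hb => ->; rewrite dvdn0.
have e : numq x * b = a * denq x.
  apply: (@intr_inj rat); rewrite !rmorphM /= numqE /x.
  by field; rewrite intr_eq0.
have : (`|denq x| %| `|numq x| * `|b|)%N by rewrite -abszM e abszM dvdn_mull.
rewrite Gauss_dvdr; last by rewrite coprime_sym coprime_num_den.
rewrite /in_Zp => h; apply: contra hb => h2; exact: dvdn_trans h2 h.
Qed.

Lemma Zp_int (a : int) : in_Zp p a%:~R.
Proof.
apply/ZpP; exists a, 1; split; last by rewrite divr1.
by rewrite /= dvdn1; apply/eqP => e; move: pp; rewrite e.
Qed.

Lemma Zp_nat (n : nat) : in_Zp p n%:R.
Proof. by have := Zp_int n; rewrite pmulrn. Qed.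

Lemma ndvd_mul (b d : int) : ~~ (p %| `|b|)%N -> ~~ (p %| `|d|)%N -> ~~ (p %| `|(b * d)%R|)%N.
Proof. by move=> hb hd; rewrite abszM Euclid_dvdM // negb_or hb hd. Qed.

Lemma nz_of (b : int) : ~~ (p %| `|b|)%N -> (b%:~R : rat) != 0.
Proof. by move=> hb; rewrite intr_eq0; apply: contraNneq hb => ->; rewrite dvdn0. Qed.

Lemma ZpM x y : in_Zp p x -> in_Zp p y -> in_Zp p (x * y).
Proof.
move=> /ZpP [a [b [hb ->]]] /ZpP [c [d [hd ->]]].
apply/ZpP; exists (a * c), (b * d); split; first exact: ndvd_mul.
by rewrite !rmorphM /=; field; rewrite !nz_of.
Qed.

Lemma ZpD x y : in_Zp p x -> in_Zp p y -> in_Zp p (x + y).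
Proof.
move=> /ZpP [a [b [hb ->]]] /ZpP [c [d [hd ->]]].
apply/ZpP; exists (a * d + c * b), (b * d); split; first exact: ndvd_mul.
by rewrite !rmorphD !rmorphM /=; field; rewrite !nz_of.
Qed.

Lemma ZpN x : in_Zp p x -> in_Zp p (- x).
Proof. by rewrite /in_Zp denqN. Qed.

Lemma ZpB x y : in_Zp p x -> in_Zp p y -> in_Zp p (x - y).
Proof. by move=> hx hy; apply: ZpD => //; apply: ZpN. Qed.

Lemma ZpX x n : in_Zp p x -> in_Zp p (x ^+ n).
Proof. by move=> hx; elim: n => [|n IH]; rewrite ?expr0 ?exprS; [apply: (Zp_nat 1)|apply: ZpM]. Qed.

Lemma Zp_sum (I : Type) (r : seq I) (P : pred I) (F : I -> rat) :
  (forall i, P i -> in_Zp p (F i)) -> in_Zp p (\big[+%R/0]_(i <- r | P i) F i).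
Proof. move=> h; apply: (big_ind (fun x => in_Zp p x)) => //; [exact: (Zp_nat 0)|exact: ZpD]. Qed.

Lemma Zp_invnat (n : nat) : ~~ (p %| n)%N -> in_Zp p (n%:R^-1).
Proof.
move=> hn; apply/ZpP; exists 1, n; split => //.
by rewrite div1r pmulrn.
Qed.

Lemma Zp_invm (m : rat) : in_Zp p m -> ~ congr_pr p 1 m 0 -> in_Zp p m^-1.
Proof.
move=> hm hm0.
have hn : ~~ (p %| `|numq m|)%N.
  apply/negP => h; apply: hm0; rewrite /congr_pr subr0 expn1.
  have : (p%:Z %| numq m)%Z by rewrite dvdzE.
  case/dvdzP => q hq.
  apply/ZpP; exists q, (denq m); split; first exact: hm.
  rewrite -{1}[m]divq_num_den hq rmorphM /=.
  have pn : (p%:R : rat) != 0 by rewrite pnatr_eq0 -lt0n prime_gt0.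
  rewrite -[(p%:Z)%:~R]/((p%:R : rat)) ?pmulrn //. field.
  by rewrite pn intr_eq0 denq_neq0.
apply/ZpP; exists (denq m), (numq m); split => //.
rewrite -{1}[m]divq_num_den invf_div //.
Qed.
End Zp.
Lemma step (m y N c c' : rat) : m != 0 -> y != 0 -> N + 1 != 0 -> 2%:R * N - 1 != 0 -> 2%:R * N + 1 != 0 ->
  c' * (N + 1) ^+ 2 = (2%:R * N + 2%:R) * (2%:R * N + 1) * c ->
  (4%:R * N + 1 - 1 / (2%:R * N - 1) ^+ 2) * (c ^+ 3 / y) + c ^+ 3 / (y * (2%:R * N - 1) ^+ 2) =
  (4%:R - 16%:R / m) * (N * c ^+ 3 / y) + (1 + 4%:R / m) * (c ^+ 3 / y) - 6%:R / m * (c ^+ 3 / (y * (N + 1)))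
  + (4%:R * (N + 1) + 1 - 1 / (2%:R * (N + 1) - 1) ^+ 2) * (c' ^+ 3 / (y * (16%:R * m))).
Proof.
move=> m0 y0 n1 n2 n3 e.
have -> : c' = (2%:R * N + 2%:R) * (2%:R * N + 1) * c / (N + 1) ^+ 2.
  by rewrite -e; field.
have -> : 2%:R * (N + 1) - 1 = 2%:R * N + 1 by ring.
field.
by rewrite n1 n2 n3 m0 y0.
Qed.

Lemma natr_double k : (k.*2)%:R = 2%:R * k%:R :> rat.
Proof. by rewrite -muln2 natrM mulrC. Qed.

Lemma binS2 k : ('C((k.+1).*2, k.+1) * (k.+1) ^ 2 = (k.+1).*2 * (k.*2).+1 * 'C(k.*2, k))%N.
Proof.
have h1 := mul_bin_diag (k.+1).*2 k.
have h2 := mul_bin_diag (k.*2).+1 k.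
have h3 := mul_bin_left (k.*2).+1 k.
rewrite doubleS /= in h1 h2 h3 *.
have e : ((k.*2).+1 - k = k.+1)%N by rewrite -addnn; lia.
rewrite e in h3.
have h4 : 'C((k.*2).+1, k.+1) = 'C((k.*2).+1, k) by apply/eqP; rewrite -(eqn_pmul2l (ltn0Sn k)) h3.
rewrite h4 in h2.
move: h1 h2; generalize ('C(k.*2.+1, k)) ('C(k.*2.+2, k.+1)) ('C(k.*2, k)) => A B C; nia.
Qed.

Definition cc k : rat := 'C(k.*2, k)%:R.

Lemma telescope (m : rat) n : m != 0 ->
  \sum_(k < n) ('C(k.*2, k)%:R ^+ 3 / ((16%:R * m) ^+ k * ((k.*2)%:R - 1) ^+ 2))
  = (4%:R - 16%:R / m) * (\sum_(k < n) (k%:R * 'C(k.*2, k)%:R ^+ 3 / (16%:R * m) ^+ k))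
     + (1 + 4%:R / m) * (\sum_(k < n) ('C(k.*2, k)%:R ^+ 3 / (16%:R * m) ^+ k))
     - 6%:R / m * (\sum_(k < n) ('C(k.*2, k)%:R ^+ 3 / ((16%:R * m) ^+ k * (k.+1)%:R)))
  + (4%:R * n%:R + 1 - 1 / ((n.*2)%:R - 1) ^+ 2) * ('C(n.*2, n)%:R ^+ 3 / (16%:R * m) ^+ n).
Proof.
move=> m0; elim: n => [|n IH].
  rewrite !big_ord0 /= bin0 expr0 !mulr0 subr0 add0r; field; by [].
rewrite !big_ord_recr /= IH.
have e := binS2 n.
have e' : ('C((n.+1).*2, n.+1)%:R : rat) * (n%:R + 1) ^+ 2 = (2%:R * n%:R + 2%:R) * (2%:R * n%:R + 1) * 'C(n.*2, n)%:R.
  have := congr1 (fun x : nat => x%:R : rat) e; rewrite /= !natrM !natr_double.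
  rewrite -[(n.+1)%:R]natr1 -[((n.*2).+1)%:R]natr1 natr_double => ->; ring.
rewrite !natr_double -[(n.+1)%:R]natr1 in e' *. rewrite [(16%:R * m) ^+ n.+1]exprSr.
have y0 : (16%:R * m) ^+ n != 0 by rewrite expf_neq0 // mulf_neq0 // pnatr_eq0.
have n1 : (n%:R + 1 : rat) != 0 by rewrite natr1 pnatr_eq0.
have n2 : (2%:R * n%:R - 1 : rat) != 0.
  by rewrite -natr_double subr_eq0 pnatr_eq1; clear; case: n.
have n3 : (2%:R * n%:R + 1 : rat) != 0.
  by rewrite -natr_double natr1 pnatr_eq0.
rewrite -addrA (step _ _ _ _ _ m0 y0 n1 n2 n3 e').
have -> : 2%:R * (n%:R + 1) - 1 = 2%:R * n%:R + 1 :> rat by ring.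
field; by rewrite m0 y0 n1 n3.
Qed.

Lemma ndvd_fact p k : prime p -> (k < p)%N -> ~~ (p %| k`!)%N.
Proof.
move=> pp; elim: k => [|k IH] hk.
  by rewrite fact0 dvdn1; apply/eqP => e; move: pp; rewrite e.
rewrite factS Euclid_dvdM // negb_or IH ?andbT; last by apply: ltnW.
apply/negP => /dvdn_leq => /(_ (ltn0Sn k)); rewrite leqNgt hk.
by [].
Qed.

Lemma p_dvd_bin p k : prime p -> (k < p)%N -> (p <= k.*2)%N -> (p %| 'C(k.*2, k))%N.
Proof.
move=> pp hk hp.
have hf := bin_fact (leq_addr k k : (k <= k + k)%N).
rewrite addnK addnn in hf.
have : (p %| (k.*2)`!)%N by apply: dvdn_fact; rewrite hp prime_gt0.
rewrite -hf !Euclid_dvdM // (negPf (@ndvd_fact p k pp hk)) /=.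
by rewrite orbF.
Qed.

Lemma split_sum (F : nat -> rat) n p : (n <= p)%N ->
  \sum_(k < p) F k = \sum_(k < n) F k + \sum_(n <= k < p) F k.
Proof. by move=> h; rewrite -!(big_mkord xpredT) (@big_cat_nat _ _ _ n 0 p _ _ (leq0n n) h). Qed.

Definition Aterm (m : rat) (k : nat) : rat :=
  'C(k.*2, k)%:R ^+ 3 / ((16%:R * m) ^+ k * ((k.*2)%:R - 1) ^+ 2).

Lemma Zp1 p : prime p -> in_Zp p 1.
Proof. move=> pp; exact: (@Zp_int p pp 1). Qed.

Lemma termZp p (m : rat) k q : prime p -> m != 0 -> in_Zp p ((16%:R * m)^-1) ->
  'C(k.*2, k) = (q * p)%N ->
  in_Zp p ('C(k.*2, k)%:R ^+ 3 / (16%:R * m) ^+ k / (p ^ 3)%:R).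
Proof.
move=> pp m0 hu hq.
have p0 : (p%:R : rat) != 0 by rewrite pnatr_eq0 -lt0n prime_gt0.
have y0 : (16%:R * m) ^+ k != 0 by rewrite expf_neq0 // mulf_neq0 // pnatr_eq0.
have -> : ('C(k.*2, k)%:R ^+ 3 / (16%:R * m) ^+ k / (p ^ 3)%:R : rat)
    = q%:R ^+ 3 * ((16%:R * m)^-1) ^+ k.
  rewrite hq natrM natrX exprVn; field; by rewrite p0 y0.
apply: ZpM => //; apply: ZpX => //; exact: Zp_nat.
Qed.

Lemma AtermZp p (m : rat) k q : prime p -> m != 0 -> in_Zp p ((16%:R * m)^-1) ->
  'C(k.*2, k) = (q * p)%N -> (0 < k)%N -> ~~ (p %| (k.*2).-1)%N ->
  in_Zp p (Aterm m k / (p ^ 3)%:R).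
Proof.
move=> pp m0 hu hq k0 hd.
have p0 : (p%:R : rat) != 0 by rewrite pnatr_eq0 -lt0n prime_gt0.
have y0 : (16%:R * m) ^+ k != 0 by rewrite expf_neq0 // mulf_neq0 // pnatr_eq0.
have d0 : (((k.*2).-1)%:R : rat) != 0.
  by rewrite pnatr_eq0; apply: contraNneq hd => ->; rewrite dvdn0.
have ed : ((k.*2)%:R - 1 : rat) = ((k.*2).-1)%:R.
  by rewrite -[in LHS](@prednK (k.*2)) ?double_gt0 // -natr1 addrK.
have -> : Aterm m k / (p ^ 3)%:R
    = (q%:R ^+ 3 * ((16%:R * m)^-1) ^+ k) * (((k.*2).-1)%:R^-1) ^+ 2.
  rewrite /Aterm ed hq natrM natrX exprVn; field; by rewrite p0 y0 d0.
apply: ZpM => //; last by apply: ZpX => //; exact: Zp_invnat.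
apply: ZpM => //; apply: ZpX => //; exact: Zp_nat.
Qed.

Theorem theorem5p2 (p : nat) (m : rat) :
  prime p -> odd p ->
  in_Zp p m -> ~ congr_pr p 1 m 0 ->
  congr_pr p 3
    (\sum_(k < p) ('C(k.*2, k)%:R ^+ 3 /
        ((16%:R * m) ^+ k * ((k.*2)%:R - 1) ^+ 2)))
    ((4%:R - 16%:R / m) *
       (\sum_(k < (p.-1)./2.+1) (k%:R * 'C(k.*2, k)%:R ^+ 3 / (16%:R * m) ^+ k))
     + (1 + 4%:R / m) *
       (\sum_(k < (p.-1)./2.+1) ('C(k.*2, k)%:R ^+ 3 / (16%:R * m) ^+ k))
     - 6%:R / m *
       (\sum_(k < (p.-1)./2.+1)
          ('C(k.*2, k)%:R ^+ 3 / ((16%:R * m) ^+ k * (k.+1)%:R)))).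
Proof.
move=> pp op hm hm0.
have m0 : m != 0.
  apply/eqP => e; apply: hm0; rewrite e /congr_pr subrr mul0r.
  exact: (@Zp_int p pp 0).
have p16 : ~~ (p %| 16)%N.
  rewrite (_ : 16 = 2 ^ 4)%N // Euclid_dvdX // andbT.
  apply/negP => /(@dvdn_leq p 2 isT) hp2.
  have e : p = 2%N by have := prime_gt1 pp; lia.
  by move: op; rewrite e.
have hu : in_Zp p ((16%:R * m)^-1).
  rewrite invfM; apply: ZpM => //; try exact: Zp_invm; exact: Zp_invnat.
set h := (p.-1)./2.
have hp : p = h.*2.+1.
  rewrite /h; clear h; case: p pp op {hm hm0 p16 hu} => [|q] //= _ oq.
  by rewrite -{1}(odd_double_half q) (negPf oq).
have h0 : (0 < h)%N.
  have := prime_gt1 pp; rewrite hp -addnn; lia.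
set n := h.+1.
have np : (n < p)%N by rewrite hp /n -addnn; lia.
rewrite /congr_pr.
rewrite (@split_sum (Aterm m) n p (ltnW np)).
rewrite (@telescope m n m0).
have e : forall X G S : rat, X + G + S - X = G + S by move=> *; ring.
rewrite e (big_ltn np) addrA.
have y0 : (16%:R * m) ^+ n != 0 by rewrite expf_neq0 // mulf_neq0 // pnatr_eq0.
have n2 : ((n.*2)%:R - 1 : rat) != 0.
  by rewrite subr_eq0 pnatr_eq1 /n doubleS.
have -> : (4%:R * n%:R + 1 - 1 / ((n.*2)%:R - 1) ^+ 2) * ('C(n.*2, n)%:R ^+ 3 / (16%:R * m) ^+ n)
   + Aterm m n = (4%:R * n%:R + 1) * ('C(n.*2, n)%:R ^+ 3 / (16%:R * m) ^+ n).
  rewrite /Aterm; field; by rewrite y0 n2.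
rewrite mulrDl; apply: ZpD => //.
  have : (p %| 'C(n.*2, n))%N by apply: p_dvd_bin => //; rewrite hp /n -!addnn; lia.
  case/dvdnP => q hq.
  rewrite -mulrA; apply: ZpM => //.
    apply: ZpD => //; [apply: ZpM => //; exact: Zp_nat | exact: Zp1].
  exact: (@termZp _ _ _ _ pp m0 hu hq).
rewrite mulr_suml big_nat_cond; apply: Zp_sum => // k /andP [/andP [hk1 hk2] _].
have : (p %| 'C(k.*2, k))%N by apply: p_dvd_bin => //; rewrite hp /n -!addnn in hk1 hk2 *; lia.
case/dvdnP => q hq.
apply: (@AtermZp _ _ _ _ pp m0 hu hq); first by lia.
apply/negP => /dvdnP [j hj].
rewrite hp /n -!addnn in hk1 hk2 hj; move: hj; case: j => [|[|j]] hj; nia.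
Qed.
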